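(* For every $g\ge1$ and every integer $c$ with $0\le c\le\lfloor g/2\rfloor$, the quantity \[ L_{g,p^c}=\prod_{i=1}^{g-2c}(p^i+(-1)^i)\cdot\prod_{i=1}^c(p^{4i-2}-1)\cdot\frac{\prod_{i=1}^g(p^{2i}-1)}{\prod_{i=1}^{2c}(p^{2i}-1)\prod_{i=1}^{g-2c}(p^{2i}-1)} \] is a polynomial in $p$ with coefficients in $\mathbb{Z}$, of degree $(g^2+4gc-8c^2+g-2c)/2$. Moreover, as $c$ ranges over $0\le c\le\lfloor g/2\rfloor$, this degree is minimal exactly for $c=0$ when $g$ is odd and exactly for $c=g/2$ when $g$ is even.
   Context: Here $p$ is regarded as an indeterminate (or a prime). *)

(* Defs.v *)
From HB Require Import structures.
From mathcomp Require Import all_boot all_order all_algebra.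
Set Implicit Arguments. Unset Strict Implicit. Unset Printing Implicit Defensive.
Import Order.TTheory GRing.Theory Num.Theory.
Local Open Scope ring_scope.

Definition Lnum (g c : nat) : {poly int} :=
  (\prod_(1 <= i < (g - 2 * c).+1) ('X^i + (-1) ^+ i)) *
  (\prod_(1 <= i < c.+1) ('X^(4 * i - 2) - 1)) *
  (\prod_(1 <= i < g.+1) ('X^(2 * i) - 1)).

Definition Lden (g c : nat) : {poly int} :=
  (\prod_(1 <= i < (2 * c).+1) ('X^(2 * i) - 1)) *
  (\prod_(1 <= i < (g - 2 * c).+1) ('X^(2 * i) - 1)).

Definition Ldeg (g c : nat) : int :=
  ((g%:Z ^+ 2 + 4 * g%:Z * c%:Z - 8 * c%:Z ^+ 2 + g%:Z - 2 * c%:Z) %/ 2)%Z.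

(* Main.v *)
Require Import Defs.
From HB Require Import structures.
From mathcomp Require Import all_boot all_order all_algebra.
From mathcomp Require Import zify ring lra.
Import Order.TTheory GRing.Theory Num.Theory.
Local Open Scope ring_scope.

Lemma monic_prod_size (a b : nat) (F : nat -> {poly int}) (d : nat -> nat) :
  (forall i, (a <= i < b)%N -> F i \is monic /\ size (F i) = (d i).+1) ->
  (\prod_(a <= i < b) F i) \is monic /\
  size (\prod_(a <= i < b) F i) = (\sum_(a <= i < b) d i)%N.+1.
Proof.
move=> H.
rewrite !big_nat.
apply: (big_ind2 (fun (P : {poly int}) (n : nat) => P \is monic /\ size P = n.+1)).
- by rewrite monic1 size_poly1.
- move=> x1 x2 y1 y2 [m1 s1] [m2 s2]; split; first by rewrite monicMl.
  rewrite size_monicM //; last by apply: monic_neq0.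
  by rewrite s1 s2 addSn addnS.
- exact: H.
Qed.

Lemma sum_id m : (2 * \sum_(1 <= i < m.+1) i = m * m.+1)%N.
Proof.
elim: m => [|m IH]; first by rewrite big_geq.
rewrite big_nat_recr //= mulnDr IH; lia.
Qed.

Lemma sum_2i m : (\sum_(1 <= i < m.+1) (2 * i) = m * m.+1)%N.
Proof.
elim: m => [|m IH]; first by rewrite big_geq.
rewrite big_nat_recr //= IH; lia.
Qed.

Lemma sum_4i m : (\sum_(1 <= i < m.+1) (4 * i - 2) = 2 * m * m)%N.
Proof.
elim: m => [|m IH]; first by rewrite big_geq.
rewrite big_nat_recr //= IH; lia.
Qed.

Definition fac (k : nat) : {poly int} := \prod_(1 <= i < k.+1) ('X^(2 * i) - 1).
Definition ffal (n k : nat) : {poly int} := \prod_(i < k) ('X^(2 * (n - i)) - 1).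

Fixpoint gb (n k : nat) : {poly int} :=
  match n, k with
  | _, 0 => 1
  | 0, _.+1 => 0
  | n'.+1, k'.+1 => gb n' k' + 'X^(2 * k'.+1) * gb n' k'.+1
  end.

Lemma ffal0 n k : (n < k)%N -> ffal n k = 0.
Proof.
move=> lt; rewrite /ffal (bigD1 (Ordinal lt)) //= subnn muln0 expr0 subrr.
by rewrite mul0r.
Qed.

Lemma gb_fac n k : gb n k * fac k = ffal n k.
Proof.
elim: n k => [|n IH] [|k].
- by rewrite /fac /ffal big_geq // big_ord0 mulr1.
- by rewrite mul0r ffal0.
- by rewrite /fac /ffal big_geq // big_ord0 mulr1.
rewrite /= mulrDl.
have fS : fac k.+1 = fac k * ('X^(2 * k.+1) - 1) by rewrite /fac big_nat_recr.
rewrite {1}fS mulrA IH -mulrA IH.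
rewrite [ffal n.+1 k.+1]/ffal big_ord_recl /=.
rewrite subn0.
have -> : \prod_(i < k) ('X^(2 * (n.+1 - bump 0 i)) - 1) = ffal n k :> {poly int}.
  by apply: eq_bigr => i _; rewrite /bump /= add1n subSS.
case: (leqP k n) => kn.
- have -> : ffal n k.+1 = ffal n k * ('X^(2 * (n - k)) - 1) by rewrite /ffal big_ord_recr.
  have -> : 'X^(2 * n.+1) = 'X^(2 * k.+1) * 'X^(2 * (n - k)) :> {poly int}.
    by rewrite -exprD; congr ('X^_); lia.
  ring.
- by rewrite (ffal0 _ _ kn) (ffal0 _ _ (leqW kn)) !(mul0r, mulr0) addr0.
Qed.

Lemma ffal_fac n k : (k <= n)%N -> ffal n k * fac (n - k) = fac n.
Proof.
elim: k => [|k IH] lt.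
- by rewrite /ffal big_ord0 mul1r subn0.
rewrite /ffal big_ord_recr /= -/(ffal n k) -mulrA.
rewrite -IH; last by lia.
congr (_ * _).
have -> : (n - k = (n - k.+1).+1)%N by lia.
by rewrite [fac (_.+1)]/fac big_nat_recr //= mulrC /fac.
Qed.
Lemma fac_ms k : fac k \is monic /\ size (fac k) = (k * k.+1).+1.
Proof.
rewrite -sum_2i; apply: monic_prod_size => i /andP[i1 _].
by rewrite monicXnsubC ?size_XnsubC //; lia.
Qed.

Lemma A_ms m : (\prod_(1 <= i < m.+1) ('X^i + (-1) ^+ i) : {poly int}) \is monic /\
  size (\prod_(1 <= i < m.+1) ('X^i + (-1) ^+ i) : {poly int}) = (\sum_(1 <= i < m.+1) i)%N.+1.
Proof.
apply: monic_prod_size => i /andP[i1 _].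
have -> : (-1) ^+ i = ((-1 : int) ^+ i)%:P :> {poly int} by rewrite rmorphXn /= polyCN polyC1.
by rewrite monicXnaddC ?size_XnaddC.
Qed.

Lemma B_ms c : (\prod_(1 <= i < c.+1) ('X^(4 * i - 2) - 1) : {poly int}) \is monic /\
  size (\prod_(1 <= i < c.+1) ('X^(4 * i - 2) - 1) : {poly int}) = (2 * c * c).+1.
Proof.
rewrite -sum_4i; apply: monic_prod_size => i /andP[i1 _].
by rewrite monicXnsubC ?size_XnsubC //; lia.
Qed.

Lemma Ldeg2 g c : Ldeg g c * 2 = g%:Z ^+ 2 + 4 * g%:Z * c%:Z - 8 * c%:Z ^+ 2 + g%:Z - 2 * c%:Z.
Proof.
have hT : (2 * (g * g.+1)./2 = g * g.+1)%N.
  have := halfK (g * g.+1); rewrite oddM /=; case: (odd g) => /=; rewrite subn0 => <-; lia.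
have E : g%:Z ^+ 2 + 4 * g%:Z * c%:Z - 8 * c%:Z ^+ 2 + g%:Z - 2 * c%:Z
   = ((g * g.+1)./2 %:Z + 2 * g%:Z * c%:Z - 4 * c%:Z ^+ 2 - c%:Z) * 2.
  have h2 : ((g * g.+1)./2 %:Z) * 2 = g%:Z * (g%:Z + 1).
    nia.
  nia.
by rewrite /Ldeg {1}E mulzK.
Qed.

Theorem lemma3p2 (g : nat) : (1 <= g)%N ->
  (forall c : nat, (c <= g./2)%N ->
     exists P : {poly int},
       P * Lden g c = Lnum g c /\ ((size P).-1)%:Z = Ldeg g c)
  /\
  (forall c : nat, (c <= g./2)%N ->
     c != (if odd g then 0%N else g./2) ->
     Ldeg g (if odd g then 0%N else g./2) < Ldeg g c).
Proof.
move=> g1; have gh := odd_double_half g.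
split=> c hc.
- have c2 : (2 * c <= g)%N by lia.
  set A := \prod_(1 <= i < (g - 2 * c).+1) ('X^i + (-1) ^+ i) : {poly int}.
  set B := \prod_(1 <= i < c.+1) ('X^(4 * i - 2) - 1) : {poly int}.
  have EP : A * B * gb g (2 * c) * Lden g c = Lnum g c.
    rewrite /Lden /Lnum -/A -/B -/(fac (2 * c)) -/(fac (g - 2 * c)) -/(fac g).
    by rewrite !mulrA -[_ * gb _ _ * _]mulrA gb_fac -mulrA ffal_fac.
  exists (A * B * gb g (2 * c)); split => //.
  have [mA sA] := A_ms (g - 2 * c).
  have [mB sB] := B_ms c.
  have [mF sF] := fac_ms g.
  have [mF1 sF1] := fac_ms (2 * c).
  have [mF2 sF2] := fac_ms (g - 2 * c).
  have mN : Lnum g c \is monic by rewrite /Lnum -/A -/B -/(fac g) !monicMl.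
  have mD : Lden g c \is monic by rewrite /Lden -/(fac (2 * c)) -/(fac (g - 2 * c)) !monicMl.
  have sN : size (Lnum g c) = ((\sum_(1 <= i < (g - 2 * c).+1) i) + 2 * c * c + g * g.+1).+1.
    rewrite /Lnum -/A -/B -/(fac g) size_monicM ?monic_neq0 ?monicMl //.
    rewrite size_monicM ?monic_neq0 // -/A sA sB sF; lia.
  have sD : size (Lden g c) = (2 * c * (2 * c).+1 + (g - 2 * c) * (g - 2 * c).+1).+1.
    rewrite /Lden -/(fac (2 * c)) -/(fac (g - 2 * c)) size_monicM ?monic_neq0 //.
    rewrite sF1 sF2; lia.
  have P0 : A * B * gb g (2 * c) != 0.
    apply/negP => /eqP P0; move: EP; rewrite P0 mul0r => /esym/eqP.
    by rewrite (negbTE (monic_neq0 mN)).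
  have hs : size (A * B * gb g (2 * c) * Lden g c) = size (Lnum g c) by rewrite EP.
  rewrite size_Mmonic // sN sD in hs.
  have hsum := sum_id (g - 2 * c).
  set D := (size (A * B * gb g (2 * c))).-1 in hs *.
  have hD : (D + (2 * c * (2 * c).+1 + (g - 2 * c) * (g - 2 * c).+1) =
            (\sum_(1 <= i < (g - 2 * c).+1) i) + 2 * c * c + g * g.+1)%N.
    rewrite /D; move: hs P0; rewrite -size_poly_eq0; lia.
  have := Ldeg2 g c => h2.
  apply: (mulIf (x := 2)) => //; rewrite h2.
  set m := (g - 2 * c)%N in hD hsum.
  have gm : g = (m + 2 * c)%N by rewrite /m; lia.
  clearbody m; subst g.
  set S := (\sum_(1 <= i < m.+1) i)%N in hD hsum.
  clearbody S.
  nia.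
- move=> hne.
  have h2 := Ldeg2 g c.
  have h2' := Ldeg2 g (if odd g then 0%N else g./2).
  move: hne h2'; case: (odd g) gh => /= gh hne h2';
    rewrite -(ltr_pM2r (_ : 0 < 2)) // h2 h2'.
  + set h := g./2 in hc gh *; clearbody h; subst g.
    have c1 : (1 <= c)%N by lia.
    nia.
  + set h := g./2 in hc gh hne *; clearbody h; subst g.
    have c1 : (c < h)%N by lia.
    nia.
Qed.
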